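(* Consider a finite tabular MDP with a unique optimal policy $\pi^*$ and $d_\rho^\pi(s)\ge d_{\min}>0$ for all states $s$ and all full-support policies $\pi$. For any $\eta\in(0,\infty)$, let $\pi_t$ be generated by the discrete DG update $\pi_{t+1}(a|s)=\pi_t(a|s)e^{\alpha w_t(s,a)U_t(s,a)}/Z^t_s$ with sufficiently small step size $\alpha>0$ (as required for $\pi_t\to\pi^*$). Then $\delta_t:=V^*-V(\pi_t)=O(1/t)$.
   Context: A finite MDP $(\mathcal S,\mathcal A,P,r,\gamma,\rho)$ with $r(s,a)\in[0,1]$, $\gamma\in[0,1)$; tabular softmax policies. $V^\pi,Q^\pi$ discounted value functions, $V(\pi)=\mathbb{E}_{s\sim\rho}V^\pi(s)$, $V^*=V(\pi^* )$, $d_\rho^\pi(s)=(1-\gamma)\sum_{t\ge0}\gamma^t\Pr(s_t=s\mid\rho,\pi)$. $U_t(s,a):=Q^{\pi_t}(s,a)-V^{\pi_t}(s)$, $\ell_t(s,a):=-\log\pi_t(a|s)$, $w_t(s,a):=\sigma(U_t(s,a)\ell_t(s,a)/\eta)$ with $\sigma(x)=1/(1+e^{-x})$, $Z^t_s:=\sum_{a'}\pi_t(a'|s)e^{\alpha w_t(s,a')U_t(s,a')}$. *)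

(* Defs.v *)
From mathcomp Require Import all_boot all_order all_algebra.
From mathcomp Require Import all_classical all_reals all_analysis.
Set Implicit Arguments. Unset Strict Implicit. Unset Printing Implicit Defensive.
Import Order.TTheory GRing.Theory Num.Theory.
Import numFieldNormedType.Exports.
Local Open Scope ring_scope.

Section MDP.
Variables (R : realType) (S A : finType).
(* P s a s' = P(s'|s,a); r s a = r(s,a); gamma discount; rho initial dist. *)
Variables (P : S -> A -> S -> R) (r : S -> A -> R) (gamma : R) (rho : S -> R).

Definition is_dist (T : finType) (mu : T -> R) : Prop :=
  (forall x, 0 <= mu x) /\ \sum_(x : T) mu x = 1.

Definition finite_mdp : Prop :=
  (forall s a, is_dist (P s a)) /\ (forall s a, 0 <= r s a <= 1) /\
  0 <= gamma < 1 /\ is_dist rho.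

(* stochastic tabular policy pi s a = pi(a|s) *)
Definition is_policy (pi : S -> A -> R) : Prop := forall s, is_dist (pi s).
Definition full_support (pi : S -> A -> R) : Prop := forall s a, 0 < pi s a.

Fixpoint state_dist (pi : S -> A -> R) (mu : S -> R) (t : nat) : S -> R :=
  match t with
  | O => mu
  | t'.+1 => fun s' =>
      \sum_(s : S) \sum_(a : A) state_dist pi mu t' s * pi s a * P s a s'
  end.

Definition dirac (s : S) : S -> R := fun s' => if s' == s then 1 else 0.

Definition Vfun (pi : S -> A -> R) (s : S) : R :=
  limn (series (fun t : nat => gamma ^+ t *
     \sum_(s' : S) \sum_(a : A) state_dist pi (dirac s) t s' * pi s' a * r s' a)).

Definition Qfun (pi : S -> A -> R) (s : S) (a : A) : R :=
  r s a + gamma * \sum_(s' : S) P s a s' * Vfun pi s'.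

Definition Vrho (pi : S -> A -> R) : R := \sum_(s : S) rho s * Vfun pi s.

Definition dvisit (pi : S -> A -> R) (s : S) : R :=
  (1 - gamma) * limn (series (fun t : nat => gamma ^+ t * state_dist pi rho t s)).

Definition optimal_policy (pi : S -> A -> R) : Prop :=
  is_policy pi /\ forall pi', is_policy pi' -> forall s, Vfun pi' s <= Vfun pi s.

Definition unique_optimal_policy (pistar : S -> A -> R) : Prop :=
  optimal_policy pistar /\ forall pi, optimal_policy pi -> pi = pistar.

Definition sigmoid (x : R) : R := 1 / (1 + expR (- x)).

Definition Ufun (pi : S -> A -> R) s a : R := Qfun pi s a - Vfun pi s.
Definition ellfun (pi : S -> A -> R) s a : R := - ln (pi s a).
Definition wfun (eta : R) (pi : S -> A -> R) s a : R :=
  sigmoid (Ufun pi s a * ellfun pi s a / eta).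

Definition Zfun (eta alpha : R) (pi : S -> A -> R) (s : S) : R :=
  \sum_(a' : A) pi s a' * expR (alpha * wfun eta pi s a' * Ufun pi s a').

Definition dg_step (eta alpha : R) (pi : S -> A -> R) : S -> A -> R :=
  fun s a => pi s a * expR (alpha * wfun eta pi s a * Ufun pi s a)
             / Zfun eta alpha pi s.

Definition dg_iter (eta alpha : R) (pi0 : S -> A -> R) (t : nat) : S -> A -> R :=
  iter t (dg_step eta alpha) pi0.

End MDP.

(* Main.v *)
Require Import Defs.
From mathcomp Require Import all_boot all_order all_algebra.
From mathcomp Require Import all_classical all_reals all_analysis.
From mathcomp Require Import ring lra.
Set Implicit Arguments. Unset Strict Implicit. Unset Printing Implicit Defensive.
Import Order.TTheory GRing.Theory Num.Theory.
Import numFieldNormedType.Exports.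
Local Open Scope classical_set_scope.
Local Open Scope ring_scope.


Section Basic.
Variables (R : realType) (S A : finType).
Variables (P : S -> A -> S -> R) (r : S -> A -> R) (gamma : R).

Lemma bigswap (c : S -> R) (h : S -> S -> R) (k : S -> A -> R) :
  \sum_(s' : S) \sum_(a : A) (\sum_(s1 : S) c s1 * h s1 s') * k s' a =
  \sum_(s1 : S) c s1 * \sum_(s' : S) \sum_(a : A) h s1 s' * k s' a.
Proof.
under eq_bigr do under eq_bigr do rewrite big_distrl /=.
under [RHS]eq_bigr do rewrite big_distrr /=.
under eq_bigr do rewrite exchange_big /=.
rewrite exchange_big /=.
apply: eq_bigr => s1 _; apply: eq_bigr => s' _.
rewrite big_distrr /=.
by apply: eq_bigr => a _; rewrite mulrA.
Qed.

Lemma sd_lin pi mu t x : state_dist P pi mu t x =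
  \sum_(s0 : S) mu s0 * state_dist P pi (Defs.dirac R s0) t x.
Proof.
elim: t x => [|t IH] x /=.
  rewrite (bigD1 x) //= /Defs.dirac eqxx mulr1 big1 ?addr0 // => s0 /negbTE.
  by rewrite eq_sym => ->; rewrite mulr0.
under eq_bigr do under eq_bigr do rewrite IH -mulrA.
rewrite (bigswap mu (fun s1 s' => state_dist P pi (Defs.dirac R s1) t s') (fun s' a => pi s' a * P s' a x)).
by apply: eq_bigr => s1 _; congr (_ * _); apply: eq_bigr => s' _; apply: eq_bigr => a _; rewrite mulrA.
Qed.

Lemma sd_S pi mu t x : state_dist P pi mu t.+1 x =
  \sum_(s : S) \sum_(a : A) state_dist P pi mu t s * pi s a * P s a x.
Proof. by []. Qed.

Lemma sd_shift pi mu t x : state_dist P pi mu t.+1 x =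
  state_dist P pi (state_dist P pi mu 1) t x.
Proof.
elim: t x => [|t IH] x //.
rewrite sd_S [RHS]sd_S.
by apply: eq_bigr => s _; apply: eq_bigr => a _; rewrite IH.
Qed.


Lemma cvg_fsum (I : finType) (f : I -> nat -> R) (l : I -> R) :
  (forall i, f i @ \oo --> l i) ->
  (fun n => \sum_(i : I) f i n) @ \oo --> \sum_(i : I) l i.
Proof.
move=> H.
have G : forall s : seq I, (fun n => \sum_(i <- s) f i n) @ \oo --> \sum_(i <- s) l i.
  elim=> [|i s IH].
    under eq_fun do rewrite big_nil.
    by rewrite big_nil; exact: cvg_cst.
  under eq_fun do rewrite big_cons.
  by rewrite big_cons; apply: cvgD => //; exact: H.
exact: G.
Qed.

Hypothesis HP : forall s a, is_dist (P s a).
Hypothesis Hr : forall s a, 0 <= r s a <= 1.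
Hypothesis Hg : 0 <= gamma < 1.

Definition Mtr (pi : S -> A -> R) s s1 := \sum_(a : A) pi s a * P s a s1.
Definition rew (pi : S -> A -> R) s := \sum_(a : A) pi s a * r s a.
Definition Rt (pi : S -> A -> R) s t := \sum_(s' : S) \sum_(a : A)
   state_dist P pi (Defs.dirac R s) t s' * pi s' a * r s' a.
Definition fR pi s t := gamma ^+ t * Rt pi s t.

Lemma sd1_dirac pi s s1 : state_dist P pi (Defs.dirac R s) 1 s1 = Mtr pi s s1.
Proof.
rewrite sd_S (bigD1 s) //= [X in _ + X]big1 ?addr0.
  by rewrite /Mtr /rew; apply: eq_bigr => a _; rewrite /Defs.dirac eqxx mul1r.
by move=> s' /negbTE H; apply: big1 => a _; rewrite /Defs.dirac H !mul0r.
Qed.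

Lemma Rt_step pi s t : Rt pi s t.+1 = \sum_(s1 : S) Mtr pi s s1 * Rt pi s1 t.
Proof.
rewrite /Rt.
under eq_bigr do under eq_bigr do rewrite sd_shift sd_lin -mulrA.
rewrite (bigswap _ (fun s1 s' => state_dist P pi (Defs.dirac R s1) t s') (fun s' a => pi s' a * r s' a)).
apply: eq_bigr => s1 _; rewrite sd1_dirac; congr (_ * _).
by apply: eq_bigr => s' _; apply: eq_bigr => a _; rewrite mulrA.
Qed.

Lemma Rt_0 pi s : Rt pi s 0 = rew pi s.
Proof.
rewrite /Rt (bigD1 s) //= [X in _ + X]big1 ?addr0.
  by rewrite /Mtr /rew; apply: eq_bigr => a _; rewrite /Defs.dirac eqxx mul1r.
by move=> s' /negbTE H; apply: big1 => a _; rewrite /Defs.dirac H !mul0r.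
Qed.

Section Pol.
Variable pi : S -> A -> R.
Hypothesis Hpi : is_policy pi.

Lemma pi_ge0 s a : 0 <= pi s a. Proof. by case: (Hpi s). Qed.
Lemma pi_sum s : \sum_(a : A) pi s a = 1. Proof. by case: (Hpi s). Qed.
Lemma P_ge0 s a s1 : 0 <= P s a s1. Proof. by case: (HP s a). Qed.
Lemma P_sum s a : \sum_(s1 : S) P s a s1 = 1. Proof. by case: (HP s a). Qed.

Lemma sd_ge0 mu t x : (forall y, 0 <= mu y) -> 0 <= state_dist P pi mu t x.
Proof.
move=> Hmu; elim: t x => [|t IH] x //.
rewrite sd_S; apply: sumr_ge0 => s _; apply: sumr_ge0 => a _.
by rewrite !mulr_ge0 // ?pi_ge0 ?P_ge0.
Qed.

Lemma sd_sum mu t : \sum_(x : S) state_dist P pi mu t x = \sum_(x : S) mu x.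
Proof.
elim: t => [|t IH] //.
under eq_bigr do rewrite sd_S.
rewrite exchange_big /= -IH; apply: eq_bigr => s _.
rewrite exchange_big /=.
under eq_bigr do rewrite -big_distrr /= P_sum mulr1.
by rewrite -big_distrr /= pi_sum mulr1.
Qed.

Lemma dirac_ge0 (s y : S) : 0 <= Defs.dirac R s y.
Proof. by rewrite /Defs.dirac; case: ifP. Qed.

Lemma dirac_sum (s : S) : \sum_(y : S) Defs.dirac R s y = 1.
Proof.
rewrite (bigD1 s) //= big1 ?addr0 /Defs.dirac ?eqxx //.
by move=> y /negbTE ->.
Qed.

Lemma Rt_ge0 s t : 0 <= Rt pi s t.
Proof.
apply: sumr_ge0 => s' _; apply: sumr_ge0 => a _.
apply: mulr_ge0; last by case/andP: (Hr s' a).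
apply: mulr_ge0; last exact: pi_ge0.
apply: sd_ge0; exact: dirac_ge0.
Qed.

Lemma Rt_le1 s t : Rt pi s t <= 1.
Proof.
rewrite -(dirac_sum s) -(sd_sum _ t).
apply: ler_sum => s' _.
rewrite -[leRHS]mulr1 -(pi_sum s') big_distrr /=.
apply: ler_sum => a _.
rewrite -mulrA; apply: ler_wpM2l; first by apply: sd_ge0; exact: dirac_ge0.
by rewrite ler_piMr ?pi_ge0 //; case/andP: (Hr s' a).
Qed.

End Pol.

Lemma geom_bound n : \sum_(0 <= k < n) gamma ^+ k <= (1 - gamma)^-1.
Proof.
case/andP: Hg => g0 g1.
have h : (1 - gamma) * \sum_(0 <= k < n) gamma ^+ k = 1 - gamma ^+ n.
  rewrite big_mkord.
  have := subrX1 gamma n; lra.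
rewrite -(mulr1 ((1 - gamma)^-1)) ler_pdivlMl ?subr_gt0 // h.
by rewrite lerBlDr lerDl exprn_ge0.
Qed.

Lemma series_cvg_gen (u : nat -> R) :
  (forall t, 0 <= u t <= gamma ^+ t) -> cvgn (series u).
Proof.
move=> Hu.
apply: cvgP; apply: nondecreasing_cvgn.
  apply: nondecreasing_series => n _ _; by case/andP: (Hu n).
exists (1 - gamma)^-1 => _ [n _ <-].
apply: le_trans (geom_bound n).
rewrite /series /=; apply: ler_sum => k _; by case/andP: (Hu k).
Qed.


Lemma fR_bound pi : is_policy pi -> forall s t, 0 <= fR pi s t <= gamma ^+ t.
Proof.
move=> Hpi s t; case/andP: Hg => g0 g1.
rewrite /fR mulr_ge0 ?exprn_ge0 ?Rt_ge0 //=.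
by rewrite ler_piMr ?exprn_ge0 ?Rt_le1.
Qed.

Lemma series_fR pi s n : series (fR pi s) n.+1 =
  rew pi s + gamma * \sum_(s1 : S) Mtr pi s s1 * series (fR pi s1) n.
Proof.
rewrite /series /= big_nat_recl //; congr (_ + _).
  by rewrite /fR expr0 mul1r Rt_0.
under eq_bigr do rewrite /fR Rt_step exprS -mulrA big_distrr /=.
rewrite -big_distrr /=; congr (_ * _).
rewrite exchange_big /=; apply: eq_bigr => s1 _.
rewrite big_distrr /=; apply: eq_bigr => k _.
by rewrite mulrCA.
Qed.

Lemma bellman pi : is_policy pi -> forall s, Vfun P r gamma pi s =
  rew pi s + gamma * \sum_(s1 : S) Mtr pi s s1 * Vfun P r gamma pi s1.
Proof.
move=> Hpi s.
have C : forall s, series (fR pi s) @ \oo --> Vfun P r gamma pi s.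
  move=> s0; exact: (series_cvg_gen (fR_bound Hpi s0)).
have h2 : (fun n => series (fR pi s) n.+1) @ \oo --> Vfun P r gamma pi s.
  by rewrite (cvg_shiftS (series (fR pi s))); exact: C.
have h3 : (fun n => rew pi s + gamma * \sum_(s1 : S) Mtr pi s s1 * series (fR pi s1) n) @ \oo
   --> rew pi s + gamma * \sum_(s1 : S) Mtr pi s s1 * Vfun P r gamma pi s1.
  apply: cvgD; first exact: cvg_cst.
  apply: cvgMl_tmp; apply: cvg_fsum => s1.
  apply: cvgMl_tmp; exact: C.
have E : (fun n => series (fR pi s) n.+1) = (fun n => rew pi s + gamma * \sum_(s1 : S) Mtr pi s s1 * series (fR pi s1) n).
  by apply: funext => n; rewrite series_fR.
rewrite E in h2.
exact: (cvg_unique _ h2 h3).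
Qed.


Lemma exmin (D : S -> R) (s : S) : exists m, forall x, D m <= D x.
Proof.
exists [arg min_(x < s) D x]%O.
case: arg_minP => // i _ Hi x; exact: Hi.
Qed.

Lemma exmax (D : S -> R) (s : S) : exists m, forall x, D x <= D m.
Proof.
exists [arg max_(x > s) D x]%O.
case: arg_maxP => // i _ Hi x; exact: Hi.
Qed.

Lemma min_princ (M : S -> S -> R) (D g : S -> R) :
  (forall s s1, 0 <= M s s1) -> (forall s, \sum_(s1 : S) M s s1 = 1) ->
  (forall s, 0 <= g s) ->
  (forall s, g s + gamma * \sum_(s1 : S) M s s1 * D s1 <= D s) ->
  forall s, 0 <= D s.
Proof.
move=> M0 M1 g0 H s.
have [m Hm] := exmin D s.
have h1 : D m <= \sum_(s1 : S) M m s1 * D s1.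
  rewrite -[leLHS]mul1r -(M1 m) big_distrl /=.
  by apply: ler_sum => s1 _; rewrite ler_wpM2l.
have h2 := H m; have h3 := g0 m.
case/andP: Hg => g1 g2.
have h4 : gamma * D m <= gamma * \sum_(s1 : S) M m s1 * D s1 by rewrite ler_wpM2l.
have : 0 <= D m by nra.
move=> h; exact: le_trans h (Hm s).
Qed.

Lemma max_princ (M : S -> S -> R) (D : S -> R) (G : R) :
  (forall s s1, 0 <= M s s1) -> (forall s, \sum_(s1 : S) M s s1 = 1) ->
  (forall s, D s <= G + gamma * \sum_(s1 : S) M s s1 * D s1) ->
  forall s, D s <= G / (1 - gamma).
Proof.
move=> M0 M1 H s.
have [m Hm] := exmax D s.
have h1 : \sum_(s1 : S) M m s1 * D s1 <= D m.
  rewrite -[leRHS]mul1r -(M1 m) big_distrl /=.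
  by apply: ler_sum => s1 _; rewrite ler_wpM2l.
have h2 := H m.
case/andP: Hg => g1 g2.
have h4 : gamma * \sum_(s1 : S) M m s1 * D s1 <= gamma * D m by rewrite ler_wpM2l.
apply: le_trans (Hm s) _.
rewrite ler_pdivlMr ?subr_gt0 //; nra.
Qed.

Lemma Mtr_ge0 pi : is_policy pi -> forall s s1, 0 <= Mtr pi s s1.
Proof. by move=> Hpi s s1; apply: sumr_ge0 => a _; rewrite mulr_ge0 ?(pi_ge0 Hpi) ?P_ge0. Qed.

Lemma Mtr_sum pi : is_policy pi -> forall s, \sum_(s1 : S) Mtr pi s s1 = 1.
Proof.
move=> Hpi s; rewrite /Mtr exchange_big /= -(pi_sum Hpi s).
by apply: eq_bigr => a _; rewrite -big_distrr /= P_sum mulr1.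
Qed.

Lemma sum_Q pi' pi s : \sum_(a : A) pi' s a * Qfun P r gamma pi s a =
  rew pi' s + gamma * \sum_(s1 : S) Mtr pi' s s1 * Vfun P r gamma pi s1.
Proof.
rewrite /Qfun /rew /Mtr.
under eq_bigr do rewrite mulrDr.
rewrite big_split /=; congr (_ + _).
under [in RHS]eq_bigr do rewrite big_distrl /=.
rewrite [in RHS]exchange_big /= big_distrr /=; apply: eq_bigr => a _.
rewrite mulrCA; congr (_ * _).
rewrite big_distrr /=; apply: eq_bigr => s1 _; by rewrite mulrA.
Qed.

Lemma sum_piU pi : is_policy pi -> forall s, \sum_(a : A) pi s a * Ufun P r gamma pi s a = 0.
Proof.
move=> Hpi s; rewrite /Ufun.
under eq_bigr do rewrite mulrBr.
rewrite sumrB sum_Q -(bellman Hpi) -big_distrl /= (pi_sum Hpi) mul1r.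
by rewrite subrr.
Qed.

Lemma pdl pi' pi : is_policy pi' -> is_policy pi -> forall s,
  Vfun P r gamma pi' s - Vfun P r gamma pi s =
  \sum_(a : A) pi' s a * Ufun P r gamma pi s a +
  gamma * \sum_(s1 : S) Mtr pi' s s1 * (Vfun P r gamma pi' s1 - Vfun P r gamma pi s1).
Proof.
move=> Hpi' Hpi s; rewrite /Ufun.
under eq_bigr do rewrite mulrBr.
rewrite sumrB sum_Q -big_distrl /= (pi_sum Hpi') mul1r.
under [X in _ = _ + gamma * X]eq_bigr do rewrite mulrBr.
rewrite sumrB {1}(bellman Hpi' s).
ring.
Qed.

Lemma V_ge0 pi : is_policy pi -> forall s, 0 <= Vfun P r gamma pi s.
Proof.
move=> Hpi; apply: (@min_princ (Mtr pi) _ (rew pi)).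
- exact: Mtr_ge0.
- exact: Mtr_sum.
- move=> s; apply: sumr_ge0 => a _; rewrite mulr_ge0 ?(pi_ge0 Hpi) //.
  by case/andP: (Hr s a).
- by move=> s; rewrite -bellman.
Qed.

Lemma rew_le1 pi : is_policy pi -> forall s, rew pi s <= 1.
Proof.
move=> Hpi s; rewrite -(pi_sum Hpi s); apply: ler_sum => a _.
by rewrite ler_piMr ?(pi_ge0 Hpi) //; case/andP: (Hr s a).
Qed.

Lemma V_le pi : is_policy pi -> forall s, Vfun P r gamma pi s <= (1 - gamma)^-1.
Proof.
move=> Hpi s; rewrite -[leRHS]mul1r.
apply: (@max_princ (Mtr pi)).
- exact: Mtr_ge0.
- exact: Mtr_sum.
- move=> s0; rewrite {1}(bellman Hpi s0) lerD2r; exact: rew_le1.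
Qed.

Lemma Q_bounds pi : is_policy pi -> forall s a,
  0 <= Qfun P r gamma pi s a <= (1 - gamma)^-1.
Proof.
move=> Hpi s a; case/andP: Hg => g0 g1; case/andP: (Hr s a) => r0 r1.
have hs : 0 <= \sum_(s1 : S) P s a s1 * Vfun P r gamma pi s1.
  by apply: sumr_ge0 => s1 _; rewrite mulr_ge0 ?P_ge0 ?V_ge0.
have hl : \sum_(s1 : S) P s a s1 * Vfun P r gamma pi s1 <= (1 - gamma)^-1.
  apply: (@le_trans _ _ (\sum_(s1 : S) P s a s1 * (1 - gamma)^-1)).
    by apply: ler_sum => s1 _; rewrite ler_wpM2l ?P_ge0 ?V_le.
  by rewrite -big_distrl /= P_sum mul1r.
rewrite /Qfun; apply/andP; split; first by rewrite addr_ge0 // mulr_ge0.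
have hB : (1 - gamma)^-1 = 1 + gamma * (1 - gamma)^-1.
  by field; rewrite subr_eq0; apply/eqP => h; move: g1; rewrite -h ltxx.
rewrite [leRHS]hB lerD // ler_wpM2l //.
Qed.

Lemma U_bounds pi : is_policy pi -> forall s a,
  `|Ufun P r gamma pi s a| <= (1 - gamma)^-1.
Proof.
move=> Hpi s a; rewrite /Ufun.
case/andP: (Q_bounds Hpi s a) => q0 q1.
have v0 := V_ge0 Hpi s; have v1 := V_le Hpi s.
rewrite ler_norml; apply/andP; split; lra.
Qed.

End Basic.


Section ExpFacts.
Variable R : realType.

Lemma ln_le_sub1 (y : R) : 0 < y -> ln y <= y - 1.
Proof.
move=> y0; have := expR_ge1Dx (ln y); rewrite lnK ?posrE //; lra.
Qed.

Lemma exp_sub1_le (x : R) : expR x - 1 <= x * expR x.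
Proof.
have h := expR_ge1Dx (- x).
have e0 := expR_gt0 x.
have : expR (- x) * expR x = 1 by rewrite expRN mulVf // gt_eqF.
nra.
Qed.

Lemma exp_lower (x X : R) : `|x| <= X -> expR (- X) * x ^+ 2 <= (expR x - 1) * x.
Proof.
move=> hx.
have hX : - X <= x /\ x <= X by move: hx; rewrite ler_norml => /andP[].
case: hX => h1 h2.
have eX : expR (- X) <= expR x by rewrite ler_expR.
have eX0 := expR_gt0 (- X).
have e1 := expR_ge1Dx x.
have e2 := exp_sub1_le x.
have ex0 := expR_gt0 x.
have X0 : 0 <= X by apply: le_trans hx.
have eXle1 : expR (- X) <= 1 by rewrite expR_le1 oppr_le0.
case: (lerP 0 x) => hx0.
  nra.
nra.
Qed.

Lemma exp_upper (x X : R) : `|x| <= X -> expR x - 1 <= x + expR X * x ^+ 2.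
Proof.
move=> hx.
have hX : - X <= x /\ x <= X by move: hx; rewrite ler_norml => /andP[].
case: hX => h1 h2.
have eX : expR x <= expR X by rewrite ler_expR.
have e1 := expR_ge1Dx x.
have e2 := exp_sub1_le x.
have ex0 := expR_gt0 x.
have X0 : 0 <= X by apply: le_trans hx.
have eXge1 : 1 <= expR X by rewrite -expR0 ler_expR.
case: (lerP 0 x) => hx0.
  nra.
nra.
Qed.

Lemma sigmoid_gt0 (x : R) : 0 < sigmoid x.
Proof. by rewrite /sigmoid mul1r invr_gt0 ltr_wpDr ?expR_ge0. Qed.

Lemma sigmoid_le1 (x : R) : sigmoid x <= 1.
Proof.
rewrite /sigmoid mul1r invf_le1 ?ltr_wpDr ?expR_ge0 //.
by rewrite lerDl expR_ge0.
Qed.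

Lemma sigmoid_half (x : R) : 0 <= x -> 2^-1 <= sigmoid x.
Proof.
move=> x0; rewrite /sigmoid mul1r.
have h : expR (- x) <= 1 by rewrite expR_le1 oppr_le0.
rewrite lef_pV2 ?posrE ?ltr_wpDr ?expR_ge0 //; lra.
Qed.

End ExpFacts.


Lemma pi_le1 (R : realType) (S A : finType) (pi : S -> A -> R) :
  is_policy pi -> forall s a, pi s a <= 1.
Proof.
move=> Hpi s a; rewrite -(pi_sum Hpi s) (bigD1 a) //= lerDl.
by apply: sumr_ge0 => b _; exact: pi_ge0.
Qed.

Lemma sum_pi_const (R : realType) (S A : finType) (pi : S -> A -> R) s c :
  is_policy pi -> \sum_(a : A) pi s a * c = c.
Proof. by move=> Hpi; rewrite -big_distrl /= (pi_sum Hpi) mul1r. Qed.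

Section Alg.
Variables (R : realType) (S A : finType).
Variables (P : S -> A -> S -> R) (r : S -> A -> R) (gamma : R).
Hypothesis HP : forall s a, is_dist (P s a).
Hypothesis Hr : forall s a, 0 <= r s a <= 1.
Hypothesis Hg : 0 <= gamma < 1.
Variables (eta alpha : R).
Hypothesis heta : 0 < eta.
Hypothesis halpha : 0 < alpha.

Local Notation V := (Vfun P r gamma).
Local Notation U := (Ufun P r gamma).
Local Notation W := (wfun P r gamma eta).
Local Notation Z := (Zfun P r gamma eta alpha).
Local Notation step := (dg_step P r gamma eta alpha).
Local Notation B := ((1 - gamma)^-1).
Local Notation X := (alpha * (1 - gamma)^-1).

Lemma B_gt0 : 0 < B.
Proof. by case/andP: Hg => _ g1; rewrite invr_gt0 subr_gt0. Qed.

Lemma X_ge0 : 0 <= X.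
Proof. by rewrite mulr_ge0 ?ltW ?B_gt0. Qed.

Section OnePol.
Variable pi : S -> A -> R.
Hypothesis Hpi : is_policy pi.
Hypothesis Hfs : full_support pi.

Lemma w_gt0 s a : 0 < W pi s a.
Proof. exact: sigmoid_gt0. Qed.

Lemma w_le1 s a : W pi s a <= 1.
Proof. exact: sigmoid_le1. Qed.

Lemma ell_ge0 s a : 0 <= ellfun pi s a.
Proof. by rewrite /ellfun oppr_ge0 ln_le0 // (pi_le1 Hpi). Qed.

Lemma w_half s a : 0 <= U pi s a -> 2^-1 <= W pi s a.
Proof.
move=> hU; apply: sigmoid_half.
apply: divr_ge0; last exact: ltW.
by apply: mulr_ge0 => //; exact: ell_ge0.
Qed.

Lemma x_bound s a : `|alpha * W pi s a * U pi s a| <= X.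
Proof.
rewrite normrM normrM (gtr0_norm halpha) (gtr0_norm (w_gt0 s a)) -mulrA.
rewrite ler_pM2l //.
have h1 := U_bounds HP Hr Hg Hpi s a.
have h2 := w_le1 s a; have h3 := w_gt0 s a.
have h4 : 0 <= `|U pi s a| by [].
nra.
Qed.

Lemma Z_ge s : expR (- X) <= Z pi s.
Proof.
rewrite -(sum_pi_const s (expR (- X)) Hpi).
apply: ler_sum => a _; rewrite ler_wpM2l ?(pi_ge0 Hpi) // ler_expR.
by have := x_bound s a; rewrite ler_norml => /andP[h1 h2].
Qed.

Lemma Z_gt0 s : 0 < Z pi s.
Proof. exact: lt_le_trans (expR_gt0 _) (Z_ge s). Qed.

Lemma Z_le s : Z pi s <= expR X.
Proof.
rewrite -(sum_pi_const s (expR X) Hpi).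
apply: ler_sum => a _; rewrite ler_wpM2l ?(pi_ge0 Hpi) // ler_expR.
by have := x_bound s a; rewrite ler_norml => /andP[h1 h2].
Qed.

Lemma step_gt0 s a : 0 < step pi s a.
Proof. by rewrite /dg_step divr_gt0 ?mulr_gt0 ?expR_gt0 ?Z_gt0 ?Hfs. Qed.


Lemma step_policy : is_policy (step pi).
Proof.
move=> s; split; first by move=> a; exact: ltW (step_gt0 s a).
rewrite /dg_step -big_distrl /= mulfV //.
by have := Z_gt0 s; rewrite lt0r => /andP[].
Qed.

Lemma ln_step s a : ln (step pi s a) =
  ln (pi s a) + alpha * W pi s a * U pi s a - ln (Z pi s).
Proof.
rewrite /dg_step lnM ?posrE ?mulr_gt0 ?expR_gt0 ?invr_gt0 ?Z_gt0 ?Hfs //.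
rewrite lnM ?posrE ?expR_gt0 ?Hfs // expRK lnV ?posrE ?Z_gt0 //.
Qed.

Definition Ew s := \sum_(a : A) pi s a * W pi s a * U pi s a ^+ 2.

Lemma Ew_ge0 s : 0 <= Ew s.
Proof.
apply: sumr_ge0 => a _; apply: mulr_ge0; last exact: sqr_ge0.
apply: mulr_ge0; [exact: (pi_ge0 Hpi) | exact: ltW (w_gt0 s a)].
Qed.

Definition c0 := alpha * expR (- X) / expR X.

Lemma c0_gt0 : 0 < c0.
Proof. by rewrite /c0 divr_gt0 ?mulr_gt0 ?expR_gt0. Qed.

Lemma term_lower s a : expR (- X) * (alpha * (W pi s a * U pi s a ^+ 2)) <=
  (expR (alpha * W pi s a * U pi s a) - 1) * U pi s a.
Proof.
have h := exp_lower (x_bound s a).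
have wp := w_gt0 s a.
have aw : 0 < alpha * W pi s a by rewrite mulr_gt0.
rewrite -(ler_pM2l aw).
set e := expR (alpha * W pi s a * U pi s a) in h *.
set u := U pi s a in h *.
set q := alpha * W pi s a in aw h *.
have -> : q * (expR (- X) * (alpha * (W pi s a * u ^+ 2))) = expR (- X) * (q * u) ^+ 2.
  by rewrite /q; ring.
have -> : q * ((e - 1) * u) = (e - 1) * (q * u) by ring.
exact: h.
Qed.

Lemma impr s : c0 * Ew s <= \sum_(a : A) step pi s a * U pi s a.
Proof.
have Zp := Z_gt0 s; have Zl := Z_le s.
have key : \sum_(a : A) step pi s a * U pi s a =
  (\sum_(a : A) pi s a * (expR (alpha * W pi s a * U pi s a) - 1) * U pi s a) / Z pi s.
  have -> : \sum_(a : A) pi s a * (expR (alpha * W pi s a * U pi s a) - 1) * U pi s a =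
     \sum_(a : A) pi s a * expR (alpha * W pi s a * U pi s a) * U pi s a -
     \sum_(a : A) pi s a * U pi s a.
    by rewrite -sumrB; apply: eq_bigr => a _; ring.
  rewrite (sum_piU HP Hr Hg Hpi s) subr0 mulr_suml; apply: eq_bigr => a _.
  by rewrite /dg_step; field; rewrite gt_eqF.
have low : expR (- X) * alpha * Ew s <=
   \sum_(a : A) pi s a * (expR (alpha * W pi s a * U pi s a) - 1) * U pi s a.
  rewrite /Ew big_distrr /=; apply: ler_sum => a _.
  have := term_lower s a; have := pi_ge0 Hpi s a.
  set t1 := expR (- X) * (alpha * (W pi s a * U pi s a ^+ 2)).
  set t2 := (expR (alpha * W pi s a * U pi s a) - 1) * U pi s a.
  move=> p0 h.
  have -> : expR (- X) * alpha * (pi s a * W pi s a * U pi s a ^+ 2) = pi s a * t1 by rewrite /t1; ring.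
  by rewrite -mulrA ler_wpM2l.
have h1 : 0 <= expR (- X) * alpha * Ew s.
  apply: mulr_ge0; last exact: Ew_ge0.
  by apply: mulr_ge0; [exact: ltW (expR_gt0 _) | exact: ltW halpha].
have N0 := le_trans h1 low.
rewrite key.
set N := \sum_(a : A) _ in N0 low *.
have eX2 := expR_gt0 X.
apply: (@le_trans _ _ (N / expR X)).
  have -> : c0 * Ew s = (expR (- X) * alpha * Ew s) / expR X by rewrite /c0; field; rewrite gt_eqF.
  by rewrite ler_wpM2r // invr_ge0 ltW.
by rewrite ler_wpM2l // lef_pV2 ?posrE.
Qed.

Lemma lnZ_le s : ln (Z pi s) <= Z pi s - 1.
Proof. exact: ln_le_sub1 (Z_gt0 s). Qed.

Lemma Zm1 s : Z pi s - 1 =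
  \sum_(a : A) pi s a * (expR (alpha * W pi s a * U pi s a) - 1).
Proof.
rewrite /Zfun.
under [RHS]eq_bigr do rewrite mulrBr mulr1.
by rewrite sumrB (pi_sum Hpi).
Qed.

Lemma term_upper s a : pi s a * (expR (alpha * W pi s a * U pi s a) - 1) <=
  alpha * (pi s a * W pi s a * U pi s a) +
  expR X * alpha ^+ 2 * (pi s a * W pi s a * U pi s a ^+ 2).
Proof.
have h := exp_upper (x_bound s a).
have p0 := pi_ge0 Hpi s a.
have w0 := w_gt0 s a; have w1 := w_le1 s a.
have eX := expR_gt0 X.
have u2 := sqr_ge0 (U pi s a).
set e := expR (alpha * W pi s a * U pi s a) in h *.
set u := U pi s a in h u2 *.
set w := W pi s a in h w0 w1 *.
have h2 : pi s a * (e - 1) <= pi s a * (alpha * w * u + expR X * (alpha * w * u) ^+ 2).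
  by rewrite ler_wpM2l.
apply: le_trans h2 _.
have h3 : pi s a * w ^+ 2 * u ^+ 2 <= pi s a * w * u ^+ 2.
  have q : 0 <= pi s a * w * u ^+ 2.
    by apply: mulr_ge0 => //; apply: mulr_ge0 => //; exact: ltW.
  have -> : pi s a * w ^+ 2 * u ^+ 2 = (pi s a * w * u ^+ 2) * w by ring.
  by rewrite ler_piMr.
have a2 : 0 <= expR X * alpha ^+ 2.
  by apply: mulr_ge0; [exact: ltW (expR_gt0 _) | exact: sqr_ge0].
have := ler_wpM2l a2 h3.
move=> h4.
have -> : pi s a * (alpha * w * u + expR X * (alpha * w * u) ^+ 2) =
   alpha * (pi s a * w * u) + expR X * alpha ^+ 2 * (pi s a * w ^+ 2 * u ^+ 2) by ring.
by rewrite lerD2l.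
Qed.

Lemma lnZ_upper s : ln (Z pi s) <=
  alpha * (\sum_(a : A) pi s a * W pi s a * U pi s a) + expR X * alpha ^+ 2 * Ew s.
Proof.
apply: le_trans (lnZ_le s) _.
rewrite Zm1 /Ew !big_distrr /= -big_split /=.
apply: ler_sum => a _; exact: term_upper.
Qed.

Lemma sumWU_le s tau : 0 < tau ->
  \sum_(a : A) pi s a * W pi s a * U pi s a <= Ew s / (2 * tau) + tau / 2.
Proof.
move=> t0.
have -> : tau / 2 = \sum_(a : A) pi s a * (tau / 2) by rewrite sum_pi_const.
rewrite /Ew mulr_suml -big_split /=; apply: ler_sum => a _.
have p0 := pi_ge0 Hpi s a.
have w0 := w_gt0 s a; have w1 := w_le1 s a.
set u := U pi s a; set w := W pi s a in w0 w1 *.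
have h : u <= u ^+ 2 / (2 * tau) + tau / 2.
  rewrite -subr_ge0.
  have -> : u ^+ 2 / (2 * tau) + tau / 2 - u = (u - tau) ^+ 2 / (2 * tau).
    by field; rewrite gt_eqF.
  by rewrite divr_ge0 ?sqr_ge0 // mulr_ge0 // ltW.
have pw : 0 <= pi s a * w by rewrite mulr_ge0 // ltW.
have h2 := ler_wpM2l pw h.
apply: le_trans h2 _.
have tt : 0 <= tau / 2 by rewrite divr_ge0 // ltW.
have : pi s a * w * (tau / 2) <= pi s a * (tau / 2).
  by rewrite -mulrA ler_wpM2l // ler_piMl.
move=> h3.
have -> : pi s a * w * (u ^+ 2 / (2 * tau) + tau / 2) =
   pi s a * w * u ^+ 2 / (2 * tau) + pi s a * w * (tau / 2) by ring.
by rewrite lerD2l.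
Qed.

Lemma grow_step s a u : 0 < u -> u <= U pi s a ->
  alpha * u / 4 - (alpha / u + expR X * alpha ^+ 2) * Ew s <=
  ln (step pi s a) - ln (pi s a).
Proof.
move=> u0 hu.
rewrite ln_step.
have hw := w_half (le_trans (ltW u0) hu).
have hZ := lnZ_upper s.
have hS := sumWU_le s (divr_gt0 u0 (ltr0Sn _ 1)).
have E0 := Ew_ge0 s.
have x0 : alpha * u / 2 <= alpha * W pi s a * U pi s a.
  have w1 := w_le1 s a.
  have wu : u / 2 <= W pi s a * U pi s a by nra.
  have := ler_wpM2l (ltW halpha) wu.
  lra.
have : alpha * (\sum_(a0 : A) pi s a0 * W pi s a0 * U pi s a0) <=
       alpha * (Ew s / (2 * (u / 2)) + u / 2 / 2) by rewrite ler_pM2l.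
have -> : Ew s / (2 * (u / 2)) = Ew s / u by congr (_ / _); field.
move=> h5.
have -> : (alpha / u + expR X * alpha ^+ 2) * Ew s = alpha * (Ew s / u) + expR X * alpha ^+ 2 * Ew s.
  by field; rewrite gt_eqF.
lra.
Qed.

Lemma psi_step s a0 : (forall b, b != a0 -> U pi s b <= 0) -> 0 <= U pi s a0 ->
  - (expR X * alpha ^+ 2 * Ew s) <= ln (step pi s a0) - ln (pi s a0).
Proof.
move=> hneg hpos.
rewrite ln_step.
have hZ := lnZ_le s.
rewrite Zm1 (bigD1 a0) //= in hZ.
have hrest : \sum_(b | b != a0) pi s b * (expR (alpha * W pi s b * U pi s b) - 1) <= 0.
  apply: sumr_le0 => b hb.
  rewrite mulr_ge0_le0 ?(pi_ge0 Hpi) // subr_le0 expR_le1.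
  rewrite mulr_ge0_le0 ?hneg // mulr_ge0 ?ltW ?w_gt0 //.
have ht := term_upper s a0.
have E1 : pi s a0 * W pi s a0 * U pi s a0 ^+ 2 <= Ew s.
  rewrite /Ew (bigD1 a0) //= lerDl; apply: sumr_ge0 => b _.
  apply: mulr_ge0; last exact: sqr_ge0.
  by apply: mulr_ge0; [exact: (pi_ge0 Hpi) | exact: ltW (w_gt0 s b)].
have E2 : alpha * (pi s a0 * W pi s a0 * U pi s a0) <= alpha * W pi s a0 * U pi s a0.
  have wu0 : 0 <= W pi s a0 * U pi s a0.
    by apply: mulr_ge0 => //; exact: ltW (w_gt0 s a0).
  have h : pi s a0 * (W pi s a0 * U pi s a0) <= W pi s a0 * U pi s a0.
    by rewrite ler_piMl // (pi_le1 Hpi).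
  have := ler_wpM2l (ltW halpha) h.
  lra.
have a2 : 0 <= expR X * alpha ^+ 2.
  by apply: mulr_ge0; [exact: ltW (expR_gt0 _) | exact: sqr_ge0].
have E3 := ler_wpM2l a2 E1.
lra.
Qed.

End OnePol.
End Alg.


Lemma sum_incr (R : realType) (f e : nat -> R) (N : nat) (a b : R) :
  (forall t, (N <= t)%N -> a - b * e t <= f t.+1 - f t) ->
  forall k, f N + k%:R * a - b * \sum_(N <= t < N + k) e t <= f (N + k)%N.
Proof.
move=> H; elim=> [|k IH].
  by rewrite addn0 big_geq // mul0r mulr0 addr0 subr0.
rewrite addnS big_nat_recr ?leq_addr //=.
have := H (N + k)%N (leq_addr _ _).
rewrite -natr1; lra.
Qed.

Lemma sum_sub_le (R : realType) (e : nat -> R) (N k : nat) :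
  (forall t, 0 <= e t) ->
  \sum_(N <= t < N + k) e t <= \sum_(0 <= t < N + k) e t.
Proof.
move=> e0; rewrite (@big_cat_nat _ _ _ N 0 (N + k)) ?leq_addr //=.
by rewrite lerDr; apply: sumr_ge0 => t _.
Qed.

Section Traj.
Variables (R : realType) (S A : finType).
Variables (P : S -> A -> S -> R) (r : S -> A -> R) (gamma : R).
Hypothesis HP : forall s a, is_dist (P s a).
Hypothesis Hr : forall s a, 0 <= r s a <= 1.
Hypothesis Hg : 0 <= gamma < 1.
Variables (eta alpha : R).
Hypothesis heta : 0 < eta.
Hypothesis halpha : 0 < alpha.
Variable pi0 : S -> A -> R.
Hypothesis Hpi0 : is_policy pi0.
Hypothesis Hfs0 : full_support pi0.

Local Notation V := (Vfun P r gamma).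
Local Notation U := (Ufun P r gamma).
Local Notation W := (wfun P r gamma eta).
Local Notation Z := (Zfun P r gamma eta alpha).
Local Notation step := (dg_step P r gamma eta alpha).
Local Notation B := ((1 - gamma)^-1).
Local Notation X := (alpha * (1 - gamma)^-1).
Local Notation pit := (dg_iter P r gamma eta alpha pi0).
Local Notation Ew pi := (Ew P r gamma eta pi).
Local Notation c0 := (c0 gamma alpha).

Lemma pit_S t : pit t.+1 = step (pit t).
Proof. by []. Qed.

Lemma pit_pol t : is_policy (pit t) /\ full_support (pit t).
Proof.
elim: t => [|t [IH1 IH2]]; first by split.
rewrite pit_S; split.
  exact: (step_policy HP Hr Hg eta halpha IH1 IH2).
by move=> s a; exact: (step_gt0 HP Hr Hg eta halpha IH1 IH2).
Qed.

Lemma pitP t : is_policy (pit t). Proof. by case: (pit_pol t). Qed.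
Lemma pitF t : full_support (pit t). Proof. by case: (pit_pol t). Qed.

Lemma Vgain t s : c0 * Ew (pit t) s <= V (pit t.+1) s - V (pit t) s.
Proof.
have Hp := pitP t; have Hp' := pitP t.+1.
have G : forall s, c0 * Ew (pit t) s <= \sum_(a : A) pit t.+1 s a * U (pit t) s a.
  by move=> s0; rewrite pit_S; exact: (impr HP Hr Hg eta halpha (pitP t)).
have g0 : forall s, 0 <= \sum_(a : A) pit t.+1 s a * U (pit t) s a.
  move=> s0; apply: le_trans (G s0).
  apply: mulr_ge0; last exact: (Ew_ge0 P r gamma eta (pitP t)).
  exact: ltW (c0_gt0 gamma halpha).
have D0 : forall s, 0 <= V (pit t.+1) s - V (pit t) s.
  apply: (min_princ Hg (Mtr_ge0 HP Hp') (Mtr_sum HP Hp') g0) => s0.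
  by rewrite (pdl HP Hr Hg Hp' Hp).
apply: le_trans (G s) _.
rewrite (pdl HP Hr Hg Hp' Hp) lerDl.
case/andP: Hg => g1 _; apply: mulr_ge0 => //.
by apply: sumr_ge0 => s1 _; rewrite mulr_ge0 ?D0 // (Mtr_ge0 HP Hp').
Qed.

Lemma Ew_pit_ge0 t s : 0 <= Ew (pit t) s.
Proof. exact: (Ew_ge0 P r gamma eta (pitP t)). Qed.

Lemma Vstep t s : V (pit t) s <= V (pit t.+1) s.
Proof.
have := Vgain t s.
have : 0 <= c0 * Ew (pit t) s.
  apply: mulr_ge0; [exact: ltW (c0_gt0 gamma halpha) | exact: Ew_pit_ge0].
lra.
Qed.

Lemma Vmono t k s : V (pit t) s <= V (pit (t + k)%N) s.
Proof.
elim: k => [|k IH]; first by rewrite addn0.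
by rewrite addnS; apply: le_trans IH (Vstep _ _).
Qed.

Lemma Esum n s : \sum_(0 <= t < n) c0 * Ew (pit t) s <= V (pit n) s - V (pit 0) s.
Proof.
elim: n => [|n IH]; first by rewrite big_geq // subrr.
rewrite big_nat_recr //=.
have := Vgain n s; lra.
Qed.

Lemma Ebound n s : \sum_(0 <= t < n) Ew (pit t) s <= B / c0.
Proof.
have c0p := c0_gt0 gamma halpha.
rewrite ler_pdivlMr //.
have := Esum n s; rewrite -big_distrr /=.
have := V_le HP Hr Hg (pitP n) s; have := V_ge0 HP Hr Hg (pitP 0) s.
rewrite mulrC; lra.
Qed.

End Traj.


Section Pure.
Variable R : realType.

Lemma rec_rate (d : nat -> R) (T0 : nat) (kap Bd : R) : 0 < kap ->
  (forall t, 0 <= d t <= Bd) ->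
  (forall t, (T0 <= t)%N -> d t.+1 <= d t - kap * d t ^+ 2) ->
  exists C, forall t, (0 < t)%N -> d t <= C / t%:R.
Proof.
move=> k0 dB H.
have step1 : forall k, k%:R * kap * d (T0 + k)%N <= 1.
  elim=> [|k IH]; first by rewrite mul0r mul0r ler01.
  have := H (T0 + k)%N (leq_addr _ _).
  rewrite addnS.
  case/andP: (dB (T0 + k)%N) => y0 _; case/andP: (dB (T0 + k).+1) => y1 _.
  move: IH; rewrite -natr1.
  set y := d (T0 + k)%N; set y' := d (T0 + k).+1; set kk : R := k%:R.
  have kk0 : 0 <= kk by rewrite /kk ler0n.
  move=> IH Hs.
  have z0 : 0 <= kap * y by rewrite mulr_ge0 // ltW.
  have hy' : kap * y' <= kap * y - (kap * y) ^+ 2.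
    have := ler_wpM2l (ltW k0) Hs; rewrite mulrBr expr2; lra.
  have IH' : kk * (kap * y) <= 1 by rewrite mulrA.
  rewrite -mulrA.
  set z := kap * y in z0 hy' IH'.
  have zy' : 0 <= kap * y' by rewrite mulr_ge0 // ltW.
  set w := kap * y' in hy' zy' *.
  have z1 : z <= 1 by nra.
  have p1 : 0 <= (1 - kk * z) * (1 - z) by rewrite mulr_ge0 // subr_ge0.
  have p2 : 0 <= (kk + 1) * (z - z ^+ 2 - w) by rewrite mulr_ge0 // ?subr_ge0 ?addr_ge0 // lerBrDl addrC -lerBrDl.
  nra.
have Bd0 : 0 <= Bd by case/andP: (dB 0%N) => h1 h2; exact: le_trans h1 h2.
exists ((T0.+1)%:R / kap + Bd * T0%:R) => t t0.
have tp : 0 < t%:R :> R by rewrite ltr0n.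
rewrite ler_pdivlMr //.
case: (leqP t T0) => ht.
  case/andP: (dB t) => h1 h2.
  have h3 : t%:R <= T0%:R :> R by rewrite ler_nat.
  have h4 : 0 <= (T0.+1)%:R / kap by rewrite divr_ge0 // ltW.
  nra.
have -> : t = (T0 + (t - T0))%N by rewrite subnKC // ltnW.
set k := (t - T0)%N.
have k1 : (1 <= k)%N by rewrite subn_gt0.
have := step1 k.
have kR : 1 <= k%:R :> R by rewrite ler1n.
rewrite natrD.
case/andP: (dB (T0 + k)%N) => h1 h2.
set y := d (T0 + k)%N.
have T0R : 0 <= T0%:R :> R by rewrite ler0n.
rewrite -natr1.
move=> hk.
have h5 : y * (T0%:R + k%:R) <= (T0%:R + 1) / kap.
  rewrite ler_pdivlMr //.
  nra.
have h6 : 0 <= Bd * T0%:R by rewrite mulr_ge0.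
lra.
Qed.

Lemma cs_sum (S : finType) (x : S -> R) :
  (\sum_(s : S) x s) ^+ 2 <= #|S|%:R * \sum_(s : S) x s ^+ 2.
Proof.
rewrite expr2 big_distrl /=.
under eq_bigr do rewrite big_distrr /=.
have h : forall i j, x i * x j <= (x i ^+ 2 + x j ^+ 2) / 2.
  move=> i j; rewrite ler_pdivlMr //.
  have := sqr_ge0 (x i - x j); rewrite sqrrB; lra.
apply: (@le_trans _ _ (\sum_(i : S) \sum_(j : S) (x i ^+ 2 + x j ^+ 2) / 2)).
  by apply: ler_sum => i _; apply: ler_sum => j _; exact: h.
set q := \sum_(i : S) x i ^+ 2.
have e1 : forall i, \sum_(j : S) (x i ^+ 2 + x j ^+ 2) / 2 = (#|S|%:R * x i ^+ 2 + q) / 2.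
  move=> i; rewrite -big_distrl /= big_split /= sumr_const.
  by rewrite [in RHS]mulr_natl /q.
under eq_bigr do rewrite e1.
rewrite -big_distrl /= big_split /= sumr_const -big_distrr /= -/q -mulr_natl.
lra.
Qed.

Lemma prod_le_factor (S : finType) (x : S -> R) (s : S) :
  (forall i, 0 <= x i <= 1) -> \prod_(i : S) x i <= x s.
Proof.
move=> H; rewrite (bigD1 s) //=.
case/andP: (H s) => h0 h1.
rewrite ler_piMr //.
by apply: prodr_ile1 => i _; exact: H.
Qed.

End Pure.


Section Opt.
Variables (R : realType) (S A : finType).
Variables (P : S -> A -> S -> R) (r : S -> A -> R) (gamma : R).
Hypothesis HP : forall s a, is_dist (P s a).
Hypothesis Hr : forall s a, 0 <= r s a <= 1.
Hypothesis Hg : 0 <= gamma < 1.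
Variable pistar : S -> A -> R.
Hypothesis Hopt : unique_optimal_policy P r gamma pistar.

Local Notation V := (Vfun P r gamma).
Local Notation U := (Ufun P r gamma).

Lemma Hps : is_policy pistar.
Proof. by case: Hopt => [[]]. Qed.

Lemma Vle_star pi : is_policy pi -> forall s, V pi s <= V pistar s.
Proof. by case: Hopt => [[_ H] _]; exact: H. Qed.

Definition switch (pi : S -> A -> R) (s : S) (a : A) : S -> A -> R :=
  fun s1 b => if s1 == s then (if b == a then 1 else 0) else pi s1 b.

Lemma switch_policy pi s a : is_policy pi -> is_policy (switch pi s a).
Proof.
move=> Hpi s1; rewrite /switch; case: eqP => _; last exact: Hpi.
split; first by move=> b; case: eqP.
rewrite (bigD1 a) //= eqxx big1 ?addr0 // => b /negbTE ->.
by [].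
Qed.

Lemma sum_switch pi s a s1 (f : A -> R) :
  \sum_(b : A) switch pi s a s1 b * f b =
  if s1 == s then f a else \sum_(b : A) pi s1 b * f b.
Proof.
rewrite /switch; case: eqP => // _.
rewrite (bigD1 a) //= eqxx mul1r big1 ?addr0 // => b /negbTE ->.
by rewrite mul0r.
Qed.

Lemma Ustar_le0 s a : U pistar s a <= 0.
Proof.
rewrite leNgt; apply/negP => hpos.
have Hp' := switch_policy s a Hps.
set pi' := switch pistar s a in Hp'.
have g0 : forall s1, 0 <= \sum_(b : A) pi' s1 b * U pistar s1 b.
  move=> s1; rewrite sum_switch; case: eqP => [->|_]; first exact: ltW.
  by rewrite (sum_piU HP Hr Hg Hps).
have D0 : forall s1, 0 <= V pi' s1 - V pistar s1.
  apply: (min_princ Hg (Mtr_ge0 HP Hp') (Mtr_sum HP Hp') g0) => s0.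
  by rewrite (pdl HP Hr Hg Hp' Hps).
have : U pistar s a <= V pi' s - V pistar s.
  rewrite (pdl HP Hr Hg Hp' Hps) sum_switch eqxx lerDl.
  case/andP: Hg => g1 _; apply: mulr_ge0 => //.
  by apply: sumr_ge0 => s1 _; rewrite mulr_ge0 ?D0 // (Mtr_ge0 HP Hp').
have := Vle_star Hp' s.
lra.
Qed.

Lemma Ustar_zero_switch s a : U pistar s a = 0 -> switch pistar s a = pistar.
Proof.
move=> h0.
have Hp' := switch_policy s a Hps.
set pi' := switch pistar s a in Hp' *.
have g0 : forall s1, 0 <= \sum_(b : A) pi' s1 b * U pistar s1 b.
  move=> s1; rewrite sum_switch; case: eqP => [->|_]; first by rewrite h0.
  by rewrite (sum_piU HP Hr Hg Hps).
have D0 : forall s1, 0 <= V pi' s1 - V pistar s1.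
  apply: (min_princ Hg (Mtr_ge0 HP Hp') (Mtr_sum HP Hp') g0) => s0.
  by rewrite (pdl HP Hr Hg Hp' Hps).
have Eq : forall s1, V pi' s1 = V pistar s1.
  move=> s1; have := D0 s1; have := Vle_star Hp' s1; lra.
case: Hopt => _ Huniq; apply: Huniq; split => // pi'' Hp'' s1.
by rewrite Eq; exact: Vle_star.
Qed.

Lemma Ustar_exists s : exists a, U pistar s a = 0.
Proof.
have hsum := sum_piU HP Hr Hg Hps s.
have hz : forall b, - (pistar s b * U pistar s b) = 0.
  move=> b.
  apply: (psumr_eq0P (P := xpredT) (F := fun b => - (pistar s b * U pistar s b))) => // [c _|].
    by rewrite oppr_ge0 mulr_ge0_le0 ?(pi_ge0 Hps) ?Ustar_le0.
  by rewrite sumrN hsum oppr0.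
case: (boolP [exists b, pistar s b != 0]) => [/existsP [b hb] | /existsPn H].
  exists b; have /eqP := hz b; rewrite oppr_eq0 mulf_eq0 (negbTE hb) /=.
  by move/eqP.
exfalso; have := pi_sum Hps s; rewrite big1 => [|b _]; last first.
  by have := H b; rewrite negbK => /eqP.
by move/eqP; rewrite eq_sym oner_eq0.
Qed.

Lemma Ustar_unique s a b : U pistar s a = 0 -> U pistar s b = 0 -> a = b.
Proof.
move=> ha hb; apply/eqP; apply/negPn/negP => hab.
have e1 := Ustar_zero_switch ha; have e2 := Ustar_zero_switch hb.
have : switch pistar s a s a = switch pistar s b s a by rewrite e1 e2.
rewrite /switch eqxx eqxx (negbTE hab).
by move/eqP; rewrite oner_eq0.
Qed.

End Opt.


Section Main.
Variables (R : realType) (S A : finType).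
Variables (P : S -> A -> S -> R) (r : S -> A -> R) (gamma : R).
Hypothesis HP : forall s a, is_dist (P s a).
Hypothesis Hr : forall s a, 0 <= r s a <= 1.
Hypothesis Hg : 0 <= gamma < 1.
Variable pistar : S -> A -> R.
Hypothesis Hopt : unique_optimal_policy P r gamma pistar.
Variables (eta alpha : R).
Hypothesis heta : 0 < eta.
Hypothesis halpha : 0 < alpha.
Variable pi0 : S -> A -> R.
Hypothesis Hpi0 : is_policy pi0.
Hypothesis Hfs0 : full_support pi0.

Local Notation V := (Vfun P r gamma).
Local Notation U := (Ufun P r gamma).
Local Notation W := (wfun P r gamma eta).
Local Notation step := (dg_step P r gamma eta alpha).
Local Notation B := ((1 - gamma)^-1).
Local Notation X := (alpha * (1 - gamma)^-1).
Local Notation pit := (dg_iter P r gamma eta alpha pi0).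
Local Notation Ew pi := (Ew P r gamma eta pi).
Local Notation c0 := (c0 gamma alpha).

Let pitP t := pitP HP Hr Hg eta halpha Hpi0 Hfs0 t.
Let pitF t := pitF HP Hr Hg eta halpha Hpi0 Hfs0 t.
Let Hps := Hps Hopt.
Let Vgain := Vgain HP Hr Hg eta halpha Hpi0 Hfs0.
Let Ebound := Ebound HP Hr Hg eta halpha Hpi0 Hfs0.
Let Ew_pit_ge0 := Ew_pit_ge0 HP Hr Hg eta halpha Hpi0 Hfs0.
Let Vmono := Vmono HP Hr Hg eta halpha Hpi0 Hfs0.

Lemma Vmono2 t t' s : (t <= t')%N -> V (pit t) s <= V (pit t') s.
Proof.
move=> h; rewrite -(subnKC h).
exact: Vmono.
Qed.

Definition Lsup s := sup (range (fun t => V (pit t) s)).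

Lemma hasL s : has_sup (range (fun t => V (pit t) s)).
Proof.
split; first by exists (V (pit 0) s); exists 0%N.
exists B => _ [t _ <-]; exact: (V_le HP Hr Hg (pitP t)).
Qed.

Lemma VleL t s : V (pit t) s <= Lsup s.
Proof. by apply: (ub_le_sup (hasL s).2); exists t. Qed.

Lemma Lunif eps : 0 < eps ->
  exists N, forall t, (N <= t)%N -> forall s, Lsup s - V (pit t) s <= eps.
Proof.
move=> e0.
have H : forall s, exists N : nat, Lsup s - eps < V (pit N) s.
  move=> s; have [e [N _ <-] He] := sup_adherent e0 (hasL s).
  by exists N.
have [f Hf] := fin_all_exists H.
exists (\max_s f s)%N => t ht s.
have h1 : (f s <= t)%N by apply: leq_trans ht; exact: leq_bigmax.
have := Vmono2 s h1; have := Hf s; lra.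
Qed.

Lemma sum_QF (pi' : S -> A -> R) s (F : S -> R) :
  \sum_(a : A) pi' s a * (r s a + gamma * \sum_(s1 : S) P s a s1 * F s1) =
  rew r pi' s + gamma * \sum_(s1 : S) Mtr P pi' s s1 * F s1.
Proof.
rewrite /rew /Mtr.
under eq_bigr do rewrite mulrDr.
rewrite big_split /=; congr (_ + _).
under [in RHS]eq_bigr do rewrite big_distrl /=.
rewrite [in RHS]exchange_big /= big_distrr /=; apply: eq_bigr => a _.
rewrite mulrCA; congr (_ * _).
rewrite big_distrr /=; apply: eq_bigr => s1 _; by rewrite mulrA.
Qed.

Definition QL s a := r s a + gamma * \sum_(s1 : S) P s a s1 * Lsup s1.

Lemma QL_le s a : QL s a <= Lsup s.
Proof.
rewrite leNgt; apply/negP => hlt.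
set u := QL s a - Lsup s.
have u0 : 0 < u by rewrite subr_gt0.
have u20 : 0 < u / 2 by rewrite divr_gt0.
have [N HN] := Lunif u20.
case/andP: Hg => g0 g1.
have hU : forall t, (N <= t)%N -> u / 2 <= U (pit t) s a.
  move=> t ht.
  have h1 : \sum_(s1 : S) P s a s1 * Lsup s1 - \sum_(s1 : S) P s a s1 * V (pit t) s1 <= u / 2.
    rewrite -sumrB.
    apply: (@le_trans _ _ (\sum_(s1 : S) P s a s1 * (u / 2))).
      apply: ler_sum => s1 _; rewrite -mulrBr ler_wpM2l ?(P_ge0 HP) //.
      exact: HN.
    by rewrite -big_distrl /= (P_sum HP) mul1r.
  have h2 := VleL t s.
  rewrite /Ufun /Qfun.
  move: hlt; rewrite /u /QL => hlt.
  set d := \sum_(s1 : S) P s a s1 * Lsup s1 - \sum_(s1 : S) P s a s1 * V (pit t) s1 in h1.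
  have h3 : gamma * d <= u / 2.
    have : gamma * d <= gamma * (u / 2) by rewrite ler_wpM2l.
    have : gamma * (u / 2) <= u / 2 by rewrite ler_piMl // ltW.
    lra.
  move: h3; rewrite /d /u /QL; lra.
set K1 := alpha / (u / 2) + expR X * alpha ^+ 2.
set a1 := alpha * (u / 2) / 4.
have a10 : 0 < a1 by rewrite /a1 divr_gt0 // mulr_gt0.
have K10 : 0 <= K1.
  apply: addr_ge0; first by apply: divr_ge0; exact: ltW.
  by apply: mulr_ge0; [exact: ltW (expR_gt0 _) | exact: sqr_ge0].
have Hgrow : forall t, (N <= t)%N ->
    a1 - K1 * Ew (pit t) s <= ln (pit t.+1 s a) - ln (pit t s a).
  move=> t ht; exact: (grow_step HP Hr Hg heta halpha (pitP t) (pitF t) u20 (hU t ht)).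
have Hk := sum_incr Hgrow.
set Y := K1 * (B / c0) - ln (pit N s a).
have Y0 : 0 <= Y.
  rewrite /Y subr_ge0; apply: le_trans (ln_le0 (pi_le1 (pitP N) s a)) _.
  apply: mulr_ge0 => //; apply: divr_ge0; first exact: ltW (B_gt0 Hg).
  exact: ltW (c0_gt0 gamma halpha).
have Y1 : 0 <= Y / a1 by rewrite divr_ge0 // ltW.
set k := Num.Def.archi_bound (Y / a1).
have hk : Y / a1 < k%:R by exact: archi_boundP.
have := Hk k.
have hs : \sum_(N <= t < N + k) Ew (pit t) s <= B / c0.
  apply: le_trans (Ebound (N + k) s).
  apply: sum_sub_le => t; exact: Ew_pit_ge0.
have hln : ln (pit (N + k)%N s a) <= 0 by apply: ln_le0; exact: (pi_le1 (pitP _)).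
have hs2 := ler_wpM2l K10 hs.
have hk2 : Y < k%:R * a1 by rewrite -ltr_pdivrMr.
rewrite /Y in hk2.
lra.
Qed.

Lemma L_ge_star s : V pistar s <= Lsup s.
Proof.
rewrite -subr_ge0; move: s.
apply: (@min_princ _ _ gamma Hg (Mtr P pistar) (fun s => Lsup s - V pistar s) (fun _ => 0)).
- exact: (Mtr_ge0 HP Hps).
- exact: (Mtr_sum HP Hps).
- by [].
move=> s; rewrite add0r.
have h1 : \sum_(a : A) pistar s a * QL s a <= Lsup s.
  rewrite -[leRHS](sum_pi_const s (Lsup s) Hps); apply: ler_sum => a _.
  by rewrite ler_wpM2l ?(pi_ge0 Hps) ?QL_le.
rewrite /QL sum_QF in h1.
rewrite (bellman HP Hr Hg Hps s).
under eq_bigr do rewrite mulrBr.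
rewrite sumrB; lra.
Qed.

Lemma delta_small eps : 0 < eps ->
  exists N, forall t, (N <= t)%N -> forall s, V pistar s - V (pit t) s <= eps.
Proof.
move=> e0; have [N HN] := Lunif e0; exists N => t ht s.
have := HN t ht s; have := L_ge_star s; lra.
Qed.

Lemma U_t_le t s b : U (pit t) s b <= U pistar s b + (V pistar s - V (pit t) s).
Proof.
rewrite /Ufun /Qfun.
have h : \sum_(s1 : S) P s b s1 * V (pit t) s1 <= \sum_(s1 : S) P s b s1 * V pistar s1.
  apply: ler_sum => s1 _; rewrite ler_wpM2l ?(P_ge0 HP) //; exact: (Vle_star Hopt (pitP t)).
case/andP: Hg => g0 _.
have := ler_wpM2l g0 h; lra.
Qed.

Lemma astar_ex : exists astar : S -> A, forall s, U pistar s (astar s) = 0.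
Proof. exact: fin_all_exists (Ustar_exists HP Hr Hg Hopt). Qed.

Section WithAstar.
Variable astar : S -> A.
Hypothesis Hastar : forall s, U pistar s (astar s) = 0.

Lemma Ustar_neg s b : b != astar s -> U pistar s b < 0.
Proof.
move=> hb; rewrite lt_neqAle (Ustar_le0 HP Hr Hg Hopt) andbT.
apply/negP => /eqP h.
by move: hb; rewrite (Ustar_unique HP Hr Hg Hopt h (Hastar s)) eqxx.
Qed.

Lemma T0_ex : exists T0, forall t, (T0 <= t)%N -> forall s b, b != astar s -> U (pit t) s b < 0.
Proof.
have H : forall x : S * A, exists N : nat, x.2 != astar x.1 ->
    forall t, (N <= t)%N -> U (pit t) x.1 x.2 < 0.
  move=> [s b] /=; case: (boolP (b != astar s)) => hb; last by exists 0%N.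
  have hn := Ustar_neg hb.
  have e0 : 0 < - U pistar s b / 2 by rewrite divr_gt0 // oppr_gt0.
  have [N HN] := delta_small e0.
  exists N => _ t ht.
  have := HN t ht s; have := U_t_le t s b; lra.
have [f Hf] := fin_all_exists H.
exists (\max_x f x)%N => t ht s b hb.
apply: (Hf (s, b)) => //.
exact: leq_trans (@leq_bigmax _ f (s, b)) ht.
Qed.

Section Rate.
Variable T0 : nat.
Hypothesis HT0 : forall t, (T0 <= t)%N -> forall s b, b != astar s -> U (pit t) s b < 0.

Lemma Ua_ge0 t s : (T0 <= t)%N -> 0 <= U (pit t) s (astar s).
Proof.
move=> ht.
have h := sum_piU HP Hr Hg (pitP t) s.
rewrite (bigD1 (astar s)) //= in h.
have hr : \sum_(b | b != astar s) pit t s b * U (pit t) s b <= 0.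
  apply: sumr_le0 => b hb; rewrite mulr_ge0_le0 ?(pi_ge0 (pitP t)) //.
  exact: ltW (HT0 ht hb).
have hp : 0 <= pit t s (astar s) * U (pit t) s (astar s) by lra.
by rewrite pmulr_rge0 // in hp; exact: pitF.
Qed.

Definition K2 := expR X * alpha ^+ 2.

Lemma K2_ge0 : 0 <= K2.
Proof. by apply: mulr_ge0; [exact: ltW (expR_gt0 _) | exact: sqr_ge0]. Qed.

Lemma BC_ge0 : 0 <= B / c0.
Proof. by apply: divr_ge0; [exact: ltW (B_gt0 Hg) | exact: ltW (c0_gt0 gamma halpha)]. Qed.

Lemma psi_lb k s : ln (pit T0 s (astar s)) - K2 * (B / c0) <= ln (pit (T0 + k)%N s (astar s)).
Proof.
have Hstep : forall t, (T0 <= t)%N ->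
    0 - K2 * Ew (pit t) s <= ln (pit t.+1 s (astar s)) - ln (pit t s (astar s)).
  move=> t ht; rewrite sub0r.
  apply: (psi_step HP Hr Hg eta halpha (pitP t) (pitF t)).
    by move=> b hb; exact: ltW (HT0 ht hb).
  exact: Ua_ge0.
have := sum_incr Hstep k.
have hs : \sum_(T0 <= t < T0 + k) Ew (pit t) s <= B / c0.
  apply: le_trans (Ebound (T0 + k) s).
  apply: sum_sub_le => t; exact: Ew_pit_ge0.
have := ler_wpM2l K2_ge0 hs.
rewrite mulr0 addr0; lra.
Qed.

Definition p0 := expR (- (K2 * (B / c0))) * \prod_(s : S) pit T0 s (astar s).

Lemma p0_gt0 : 0 < p0.
Proof.
rewrite /p0 mulr_gt0 ?expR_gt0 //; apply: prodr_gt0 => s _; exact: pitF.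
Qed.

Lemma pit_lb t s : (T0 <= t)%N -> p0 <= pit t s (astar s).
Proof.
move=> ht; rewrite -(subnKC ht).
have h := psi_lb (t - T0) s.
have e : expR (ln (pit T0 s (astar s)) - K2 * (B / c0)) <= expR (ln (pit (T0 + (t - T0)) s (astar s))).
  by rewrite ler_expR.
rewrite expRD !lnK ?posrE ?pitF // in e.
apply: le_trans e; rewrite /p0 mulrC ler_wpM2r ?expR_ge0 //.
apply: prod_le_factor => i; rewrite (pi_ge0 (pitP T0)) /=.
exact: (pi_le1 (pitP T0)).
Qed.

Definition Delta t := \sum_(s : S) (V pistar s - V (pit t) s).

Lemma Delta_ge0 t : 0 <= Delta t.
Proof.
apply: sumr_ge0 => s _; rewrite subr_ge0; exact: (Vle_star Hopt (pitP t)).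
Qed.

Lemma Delta_le t : Delta t <= #|S|%:R * B.
Proof.
have -> : #|S|%:R * B = \sum_(s : S) B by rewrite sumr_const mulr_natl.
rewrite /Delta.
apply: ler_sum => s _.
have := V_le HP Hr Hg Hps s; have := V_ge0 HP Hr Hg (pitP t) s; lra.
Qed.

Lemma Ew_lb t s : (T0 <= t)%N -> p0 / 2 * U (pit t) s (astar s) ^+ 2 <= Ew (pit t) s.
Proof.
move=> ht.
rewrite (_ : Ew (pit t) s = \sum_(a : A) pit t s a * W (pit t) s a * U (pit t) s a ^+ 2) //.
rewrite (bigD1 (astar s)) //=.
have hr : 0 <= \sum_(b | b != astar s) pit t s b * W (pit t) s b * U (pit t) s b ^+ 2.
  apply: sumr_ge0 => b _; apply: mulr_ge0; last exact: sqr_ge0.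
  apply: mulr_ge0; [exact: (pi_ge0 (pitP t)) | exact: ltW (w_gt0 _ _ _ _ _ _ _)].
have hw := w_half heta (pitP t) (Ua_ge0 s ht).
have hp := pit_lb s ht.
have p00 := p0_gt0.
have x2 := sqr_ge0 (U (pit t) s (astar s)).
set x := U (pit t) s (astar s) ^+ 2 in x2 hr *.
set w := W (pit t) s (astar s) in hw *.
set pp := pit t s (astar s) in hp *.
have h1 : p0 / 2 <= pp * w.
  have : p0 * 2^-1 <= pp * 2^-1 by rewrite ler_wpM2r.
  have : pp * 2^-1 <= pp * w by rewrite ler_wpM2l // ltW // (lt_le_trans p00 hp).
  lra.
have := ler_wpM2r x2 h1.
lra.
Qed.

Lemma delta_le_G t s0 : (T0 <= t)%N ->
  V pistar s0 - V (pit t) s0 <= (\sum_(s : S) U (pit t) s (astar s)) / (1 - gamma).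
Proof.
move=> ht; move: s0.
apply: (max_princ Hg (Mtr_ge0 HP Hps) (Mtr_sum HP Hps)) => s.
rewrite (pdl HP Hr Hg Hps (pitP t)) lerD2r.
apply: (@le_trans _ _ (U (pit t) s (astar s))).
  rewrite -[leRHS](sum_pi_const s (U (pit t) s (astar s)) Hps).
  apply: ler_sum => a _; rewrite ler_wpM2l ?(pi_ge0 Hps) //.
  case: (eqVneq a (astar s)) => [->|hne]; first by [].
  exact: ltW (lt_le_trans (HT0 ht hne) (Ua_ge0 s ht)).
rewrite (bigD1 s) //= lerDl; apply: sumr_ge0 => s1 _; exact: Ua_ge0.
Qed.

Definition kap := c0 * p0 / 2 * (1 - gamma) ^+ 2 / (#|S|%:R + 1) ^+ 3.

Lemma kap_gt0 : 0 < kap.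
Proof.
case/andP: Hg => g0 g1.
have hn : 0 < #|S|%:R + 1 :> R by have := ler0n R #|S|; lra.
have c0p := c0_gt0 gamma halpha.
have p00 := p0_gt0.
apply: divr_gt0; last exact: exprn_gt0.
apply: mulr_gt0; last by apply: exprn_gt0; rewrite subr_gt0.
by apply: divr_gt0 => //; apply: mulr_gt0.
Qed.

Lemma Delta_rec t : (T0 <= t)%N -> Delta t.+1 <= Delta t - kap * Delta t ^+ 2.
Proof.
move=> ht.
set G := \sum_(s : S) U (pit t) s (astar s).
set Q := \sum_(s : S) U (pit t) s (astar s) ^+ 2.
set n : R := #|S|%:R.
have n0 : 0 <= n by rewrite /n ler0n.
have G0 : 0 <= G by apply: sumr_ge0 => s _; exact: Ua_ge0.
have Q0 : 0 <= Q by apply: sumr_ge0 => s _; exact: sqr_ge0.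
have c0p := c0_gt0 gamma halpha.
have p00 := p0_gt0.
case/andP: Hg => g0 g1.
have g1' : 0 < 1 - gamma by rewrite subr_gt0.
have hgain : c0 * (p0 / 2) * Q <= Delta t - Delta t.+1.
  have -> : Delta t - Delta t.+1 = \sum_(s : S) (V (pit t.+1) s - V (pit t) s).
    by rewrite /Delta -sumrB; apply: eq_bigr => s _; ring.
  rewrite /Q big_distrr /=; apply: ler_sum => s _.
  apply: le_trans (Vgain t s).
  rewrite -mulrA; apply: ler_wpM2l; [exact: ltW | exact: Ew_lb].
have hD : (1 - gamma) * Delta t <= n * G.
  rewrite mulrC -ler_pdivlMr // /Delta.
  have -> : n * G / (1 - gamma) = \sum_(s : S) (G / (1 - gamma)).
    by rewrite sumr_const -mulr_natl /n mulrA.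
  apply: ler_sum => s _; exact: delta_le_G.
have hcs : G ^+ 2 <= n * Q by exact: cs_sum.
have D0 := Delta_ge0 t.
set D := Delta t in hgain hD D0 *.
have h1 : ((1 - gamma) * D) ^+ 2 <= (n * G) ^+ 2.
  by rewrite ler_sqr ?nnegrE ?mulr_ge0 // ltW.
have h2 : (n * G) ^+ 2 <= n ^+ 3 * Q.
  have h := ler_wpM2l (sqr_ge0 n) hcs.
  rewrite exprMn; apply: (le_trans h).
  by rewrite mulrA -exprSr.
have h3 : n ^+ 3 * Q <= (n + 1) ^+ 3 * Q.
  apply: ler_wpM2r => //.
  rewrite lerXn2r ?nnegrE ?addr_ge0 //.
  by rewrite lerDl.
have n1 : 0 < (n + 1) ^+ 3 by apply: exprn_gt0; lra.
have h4 : (1 - gamma) ^+ 2 * D ^+ 2 / (n + 1) ^+ 3 <= Q.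
  rewrite ler_pdivrMr // -exprMn.
  apply: (le_trans h1); apply: (le_trans h2); apply: (le_trans h3).
  by rewrite mulrC.
have h5 : kap * D ^+ 2 = c0 * (p0 / 2) * ((1 - gamma) ^+ 2 * D ^+ 2 / (n + 1) ^+ 3).
  by rewrite /kap /n; field; rewrite gt_eqF.
have cp : 0 <= c0 * (p0 / 2).
  apply: mulr_ge0; [exact: ltW | apply: divr_ge0 => //; exact: ltW].
have := ler_wpM2l cp h4.
rewrite -h5; lra.
Qed.

End Rate.

End WithAstar.

Lemma main_rate (rho : S -> R) : is_dist rho ->
  exists C, forall t, (0 < t)%N ->
    Vrho P r gamma rho pistar - Vrho P r gamma rho (pit t) <= C / t%:R.
Proof.
move=> [rho0 rho1].
have [astar Ha] := astar_ex.
have [T0 HT0] := T0_ex Ha.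
have Hb : forall t, 0 <= Delta t <= #|S|%:R * B.
  by move=> t; rewrite Delta_ge0 Delta_le.
have [C HC] := rec_rate (kap_gt0 astar T0) Hb (Delta_rec HT0). 

exists C => t t0.
apply: le_trans (HC t t0).
rewrite /Vrho -sumrB /Delta; apply: ler_sum => s _.
rewrite -mulrBr ler_piMl ?subr_ge0 ?(Vle_star Hopt (pitP t)) //.
rewrite -rho1 (bigD1 s) //= lerDl; apply: sumr_ge0 => s1 _; exact: rho0.
Qed.

End Main.

Theorem corollary4 (R : realType) (S A : finType)
  (P : S -> A -> S -> R) (r : S -> A -> R) (gamma : R) (rho : S -> R)
  (pistar : S -> A -> R) (dmin : R) :
  finite_mdp P r gamma rho ->
  unique_optimal_policy P r gamma pistar ->
  0 < dmin ->
  (forall pi, is_policy pi -> full_support pi ->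
     forall s, dmin <= dvisit P gamma rho pi s) ->
  forall eta : R, 0 < eta ->
  forall pi0 : S -> A -> R, is_policy pi0 -> full_support pi0 ->
  exists alpha0 : R, 0 < alpha0 /\
    forall alpha : R, 0 < alpha -> alpha < alpha0 ->
      exists C : R, forall t : nat, (0 < t)%N ->
        Vrho P r gamma rho pistar
          - Vrho P r gamma rho (dg_iter P r gamma eta alpha pi0 t)
        <= C / t%:R.
Proof.
move=> [HP [Hr [Hg Hrho]]] Hopt _ _ eta heta pi0 Hpi0 Hfs0.
exists 1; split; first exact: ltr01.
move=> alpha halpha _.
exact: (main_rate HP Hr Hg Hopt heta halpha Hpi0 Hfs0 Hrho).
Qed.
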